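(* Let $G$ be a connected graph with $n$ nodes and fix $t\ge 0$. Then there exists an index $i\in\{1,\dots,n\}$ such that, writing $e_i$ for the $i$-th standard basis vector, $$\mathbb E\|v(t)-\bar v\|_1\ \text{ for } v(0)=e_i \;\ge\; \mathbb E\|v(t)-\bar v\|_1\ \text{ for } v(0)=w$$ for every $w\in\mathbb R^n$ with $\|w\|_1=1$. That is, the maximum of $\mathbb E\|v(t)-\bar v\|_1$ over all initial vectors of unit $L^1$ norm is attained at some $e_i$.
   Context: Let $G=(V,E)$ be a finite, undirected, connected graph with $V=\{1,\dots,n\}$. The averaging process on $G$: the state vector $v(t)\in\mathbb R^n$, $t=0,1,2,\dots$, starts from a given $v(0)$; at each step $t\ge 1$ an edge $\{i,j\}\in E$ is chosen uniformly at random (independently of all previous choices) and both $v_i$ and $v_j$ are replaced by $(v_i+v_j)/2$, all other coordinates unchanged. Let $\bar v=(a,\dots,a)^T$ with $a=\frac1n\sum_i v_i(0)$ (so $\bar v$ depends on the initial vector). *)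

(* Defs.v *)
From HB Require Import structures.
From mathcomp Require Import all_boot all_order all_algebra.
From mathcomp Require Import reals.
Set Implicit Arguments. Unset Strict Implicit. Unset Printing Implicit Defensive.
Import Order.TTheory GRing.Theory Num.Theory.
Local Open Scope ring_scope.

Section Averaging.
Variables (R : realType) (n : nat).

(* Edges of the simple graph given by the symmetric irreflexive relation e
   on 'I_n, each unordered edge {i,j} represented once as (i,j) with i < j. *)
Definition edges (e : rel 'I_n) : {set 'I_n * 'I_n} :=
  [set p : 'I_n * 'I_n | (p.1 < p.2)%N && e p.1 p.2].

Definition avg_step (p : 'I_n * 'I_n) (v : 'rV[R]_n) : 'rV[R]_n :=
  \row_k (if (k == p.1) || (k == p.2) then (v 0 p.1 + v 0 p.2) / 2 else v 0 k).

Definition avg_run (v : 'rV[R]_n) (s : seq ('I_n * 'I_n)) : 'rV[R]_n :=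
  foldl (fun w p => avg_step p w) v s.

Definition vbar (v : 'rV[R]_n) : 'rV[R]_n :=
  const_mx ((\sum_i v 0 i) / n%:R).

Definition norm1 (v : 'rV[R]_n) : R := \sum_i `|v 0 i|.

(* E || v(t) - \bar v ||_1 for v(0) = v0: average over the #|E|^t equally
   likely sequences of t independent uniformly chosen edges. *)
Definition expected_dev (e : rel 'I_n) (t : nat) (v0 : 'rV[R]_n) : R :=
  (\sum_(f : {ffun 'I_t -> 'I_n * 'I_n} | [forall k, f k \in edges e])
      norm1 (avg_run v0 (fgraph f) - vbar v0)) / (#|edges e| ^ t)%:R.

End Averaging.

(* Main.v *)
Require Import Defs.
From HB Require Import structures.
From mathcomp Require Import all_boot all_order all_algebra.
From mathcomp Require Import reals.
From mathcomp Require Import ring.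
Set Implicit Arguments. Unset Strict Implicit.
Import Order.TTheory GRing.Theory Num.Theory.
Local Open Scope ring_scope.

Section Helpers.
Variables (R : realType) (n : nat).

Definition Fdev (s : seq ('I_n * 'I_n)) (v : 'rV[R]_n) : 'rV[R]_n :=
  avg_run v s - vbar v.

Lemma avg_step_lin p (a : R) (v w : 'rV[R]_n) :
  avg_step p (a *: v + w) = a *: avg_step p v + avg_step p w.
Proof.
apply/rowP => k; rewrite /avg_step !mxE; case: ifP => _; rewrite ?mxE //.
ring.
Qed.

Lemma avg_run_lin s (a : R) (v w : 'rV[R]_n) :
  avg_run (a *: v + w) s = a *: avg_run v s + avg_run w s.
Proof.
elim: s v w => [|p s IH] v w //=.
by rewrite /avg_run /= -IH -avg_step_lin.
Qed.

Lemma vbar_lin (a : R) (v w : 'rV[R]_n) :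
  vbar (a *: v + w) = a *: vbar v + vbar w.
Proof.
apply/rowP => k; rewrite !mxE.
under eq_bigr do rewrite !mxE.
rewrite big_split /= -mulr_sumr; ring.
Qed.

Lemma Fdev_lin s (a : R) (v w : 'rV[R]_n) :
  Fdev s (a *: v + w) = a *: Fdev s v + Fdev s w.
Proof.
apply/rowP => k; rewrite /Fdev avg_run_lin vbar_lin !mxE; ring.
Qed.

Lemma Fdev0 s : Fdev s 0 = 0.
Proof.
have H := Fdev_lin s 1 0 0; rewrite !scale1r !addr0 in H.
by apply: (addrI (Fdev s 0)); rewrite -H addr0.
Qed.

Lemma Fdev_sum s (c : 'I_n -> R) (d : 'I_n -> 'rV[R]_n) :
  Fdev s (\sum_j c j *: d j) = \sum_j c j *: Fdev s (d j).
Proof.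
elim/big_rec2: _ => [|j x y _ <-]; first exact: Fdev0.
by rewrite Fdev_lin.
Qed.

Lemma norm1_sum (c : 'I_n -> R) (u : 'I_n -> 'rV[R]_n) :
  norm1 (\sum_j c j *: u j) <= \sum_j `|c j| * norm1 (u j).
Proof.
rewrite /norm1.
under eq_bigr => k _ do rewrite summxE.
under [X in _ <= X]eq_bigr => j _ do rewrite mulr_sumr.
rewrite exchange_big /=.
apply: ler_sum => k _.
apply: le_trans (ler_norm_sum _ _ _) _.
by apply: ler_sum => j _; rewrite mxE normrM.
Qed.

End Helpers.

Theorem theorem2 (R : realType) (n : nat) (e : rel 'I_n)
  (hn : (0 < n)%N) (hsym : symmetric e) (hirr : irreflexive e)
  (hconn : forall i j : 'I_n, connect e i j) (t : nat) :
  exists i : 'I_n, forall w : 'rV[R]_n, norm1 w = 1 ->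
    expected_dev e t w <= expected_dev e t (delta_mx 0 i).
Proof.
set D := fun i : 'I_n => expected_dev e t (delta_mx 0 i : 'rV[R]_n).
have i0 : 'I_n := Ordinal hn.
exists [arg max_(i > i0) D i]%O.
case: arg_maxP => // i _ Hmax w Hw.
have Hw' : w = \sum_j w 0 j *: (delta_mx 0 j : 'rV[R]_n).
  by rewrite {1}(matrix_sum_delta w) big_ord1.
have key : expected_dev e t w <= \sum_j `|w 0 j| * D j.
  rewrite /D /expected_dev.
  under [X in _ <= X]eq_bigr => j _ do rewrite mulrA.
  rewrite -mulr_suml.
  apply: ler_wpM2r; first by rewrite invr_ge0.
  under [X in _ <= X]eq_bigr => j _ do rewrite mulr_sumr.
  rewrite [X in _ <= X]exchange_big /=.
  apply: ler_sum => f _.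
  rewrite -/(Fdev _ _) {1}Hw' Fdev_sum.
  exact: le_trans (norm1_sum _ _) (le_refl _).
apply: le_trans key _.
apply: le_trans (ler_sum _ (fun j _ => ler_wpM2l (normr_ge0 (w 0 j)) (Hmax j isT))) _.
by rewrite -mulr_suml -/(norm1 w) Hw mul1r.
Qed.
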